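(* Let $(X,\mathrm{d})$ be a compact metric space, let $k\geq 1$ and let $\mathscr{F}=\{f_1,\dots,f_k\}$ be a finite family of homeomorphisms of $X$. Consider the symbolic one-step skew-product $\Phi=\tau\ltimes\mathscr{F}$ on $\Sigma_k\times X$. Suppose that $X$ is a strict attractor of $\mathscr{F}$. Then the strong unstable foliation $\mathcal{F}^{uu}(\Phi)$ is minimal, i.e. every leaf $W^{uu}(\omega,x)$, $(\omega,x)\in\Sigma_k\times X$, is dense in $\Sigma_k\times X$.
   Context: $\Sigma_k=\{1,\dots,k\}^{\mathbb{Z}}$ with the metric $\mathrm{d}_{\Sigma_k}(\omega,\omega')=\nu^m$, $m=\min\{i\geq 0:\omega_i\neq\omega'_i\text{ or }\omega_{-i}\neq\omega'_{-i}\}$, for a fixed $0<\nu<1$; $\tau$ is the shift $(\tau\omega)_i=\omega_{i+1}$. The skew-product is $\Phi(\omega,x)=(\tau(\omega),f_{\omega_0}(x))$. The local stable (resp. unstable) set $W^s_{loc}(\omega)$ (resp. $W^u_{loc}(\omega)$) is the set of $\omega'\in\Sigma_k$ with $\omega'_i=\omega_i$ for all $i\geq0$ (resp. for all $i<0$). Set $W^{ss}_{loc}(\omega,x)=W^s_{loc}(\omega)\times\{x\}$, $W^{uu}_{loc}(\omega,x)=W^u_{loc}(\omega)\times\{x\}$, $W^{ss}(\omega,x)=\bigcup_{n\geq0}\Phi^{-n}(W^{ss}_{loc}(\Phi^n(\omega,x)))$, $W^{uu}(\omega,x)=\bigcup_{n\geq0}\Phi^{n}(W^{uu}_{loc}(\Phi^{-n}(\omega,x)))$.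 $\mathcal{F}^{uu}(\Phi)=\{W^{uu}(\omega,x)\}$, $\mathcal{F}^{ss}(\Phi)=\{W^{ss}(\omega,x)\}$; a foliation is minimal if each leaf is dense. The Hutchinson operator of $\mathscr{F}$ is $F(A)=f_1(A)\cup\dots\cup f_k(A)$ on the hyperspace $\mathscr{K}(X)$ of nonempty compact subsets of $X$ with the Hausdorff metric $\mathrm{d_H}$. A set $K\in\mathscr{K}(X)$ is a strict attractor of $\mathscr{F}$ if there is an open $U\supset K$ such that $F^n(S)\to K$ in $\mathrm{d_H}$ for every nonempty compact $S\subset U$; for $K=X$ this means $F^n(S)\to X$ for every $S\in\mathscr{K}(X)$. *)

(* Defs.v *)
From HB Require Import structures.
From mathcomp Require Import all_boot all_order all_algebra.
From mathcomp Require Import all_classical all_reals topology normedtype.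
Set Implicit Arguments. Unset Strict Implicit. Unset Printing Implicit Defensive.
Import Order.TTheory GRing.Theory Num.Theory.
Local Open Scope classical_set_scope.
Local Open Scope ring_scope.

(* Sigma_k = {symbols}^Z; symbols {1..k} are represented by 'I_k. *)
Definition Sigma (k : nat) := int -> 'I_k.

Definition shift k (w : Sigma k) : Sigma k := fun i => w (i + 1)%R.

Definition agree_below k (w w' : Sigma k) (m : nat) : Prop :=
  forall i : int, (`|i| < m)%N -> w i = w' i.

(* d_Sigma(w,w') = nu^m, m = min{i >= 0 : w_i <> w'_i or w_-i <> w'_-i},
   (0 if w = w'); written as the infimum of nu^m over the (downward closed)
   set of m such that w, w' agree on all |i| < m. *)
Definition dSigma {R : realType} (nu : R) k (w w' : Sigma k) : R :=
  inf [set nu ^+ m | m in [set m | agree_below w w' m]].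

Definition Phi k {X : Type} (f : 'I_k -> X -> X) (p : Sigma k * X) : Sigma k * X :=
  (shift p.1, f (p.1 0%R) p.2).

Definition Wu_loc k (w : Sigma k) : set (Sigma k) :=
  [set w' | forall i : int, (i < 0)%R -> w' i = w i].

Definition Wuu_loc k {X : Type} (p : Sigma k * X) : set (Sigma k * X) :=
  [set q | Wu_loc p.1 q.1 /\ q.2 = p.2].

(* W^uu(p) = U_n Phi^n (W^uu_loc(Phi^-n p)); Phi^-n p is the (unique, as
   Phi is bijective) point q with Phi^n q = p. *)
Definition Wuu k {X : Type} (f : 'I_k -> X -> X) (p : Sigma k * X) :
    set (Sigma k * X) :=
  [set r | exists n q q', iter n (Phi f) q = p /\ Wuu_loc q q' /\
                          iter n (Phi f) q' = r].

Definition homeomorphism {X : topologicalType} (h : X -> X) : Prop :=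
  continuous h /\ exists h' : X -> X,
    [/\ cancel h h', cancel h' h & continuous h'].

Definition hutchinson k {X : Type} (f : 'I_k -> X -> X) (A : set X) : set X :=
  \bigcup_(i in [set: 'I_k]) (f i @` A).

Definition nbhs_set {R : realType} {X : pseudoMetricType R} (A : set X) (e : R)
  : set X := [set y | exists2 a, A a & ball a e y].

(* A_n --> K in the Hausdorff metric d_H: for every e > 0, eventually
   A_n is in the e-neighbourhood of K and K in the e-neighbourhood of A_n. *)
Definition hausdorff_cvg {R : realType} {X : pseudoMetricType R}
  (A : nat -> set X) (K : set X) : Prop :=
  forall e : R, 0 < e -> exists N : nat, forall n : nat, (N <= n)%N ->
    A n `<=` nbhs_set K e /\ K `<=` nbhs_set (A n) e.

Definition strict_attractor {R : realType} {X : pseudoMetricType R} k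
  (f : 'I_k -> X -> X) (K : set X) : Prop :=
  [/\ compact K, K !=set0 &
   exists U : set X, [/\ open U, K `<=` U &
     forall S : set X, compact S -> S !=set0 -> S `<=` U ->
       hausdorff_cvg (fun n => iter n (hutchinson f) S) K]].

(* density in Sigma_k x X with the product (max) metric of d_Sigma and d *)
Definition dense_SigmaX {R : realType} (nu : R) {X : pseudoMetricType R} k
  (A : set (Sigma k * X)) : Prop :=
  forall (p : Sigma k * X) (e : R), 0 < e ->
    exists2 q, A q & dSigma nu p.1 q.1 < e /\ ball p.2 e q.2.

(* Main.v *)
Require Import Defs.
From HB Require Import structures.
From mathcomp Require Import all_boot all_order all_algebra.
From mathcomp Require Import all_classical all_reals topology normedtype.
From mathcomp Require Import sequences zify.
Import Order.TTheory GRing.Theory Num.Theory.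
Local Open Scope classical_set_scope.
Local Open Scope ring_scope.

Module Helpers.
Set Implicit Arguments. Unset Strict Implicit. Unset Printing Implicit Defensive.

Definition wm {X : Type} k (f : 'I_k -> X -> X) (s : seq 'I_k) (v : X) : X :=
  foldl (fun x i => f i x) v s.

Lemma wm_cat {X : Type} k (f : 'I_k -> X -> X) s1 s2 v :
  wm f (s1 ++ s2) v = wm f s2 (wm f s1 v).
Proof. by rewrite /wm foldl_cat. Qed.

Lemma wm_rcons {X : Type} k (f : 'I_k -> X -> X) s i v :
  wm f (rcons s i) v = f i (wm f s v).
Proof. by rewrite /wm foldl_rcons. Qed.

Lemma wm_cont {X : topologicalType} k (f : 'I_k -> X -> X) s :
  (forall i, continuous (f i)) -> continuous (wm f s).
Proof.
move=> fc; elim: s => [|i s IH] x /=; first exact: cvg_id.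
have -> : wm f (i :: s) = wm f s \o f i by [].
by apply: continuous_comp; [apply: fc|apply: IH].
Qed.

Lemma hutch_word {X : Type} k (f : 'I_k -> X -> X) n v a :
  iter n (hutchinson f) [set v] a -> exists s, size s = n /\ a = wm f s v.
Proof.
elim: n a => [|n IH] a /=; first by move=> ->; exists [::].
move=> [i _ [b /IH [s [sz ->]] <-]].
by exists (rcons s i); rewrite size_rcons sz wm_rcons.
Qed.

Lemma lemmaA {R : realType} {X : pseudoMetricType R} k (f : 'I_k -> X -> X) :
  strict_attractor f [set: X] -> forall v (e : R), 0 < e ->
  exists N, forall n, (N <= n)%N -> forall x,
    exists s, size s = n /\ ball (wm f s v) e x.
Proof.
move=> [_ _ [U [_ TU H]]] v e e0.
have /(_ e e0) [N HN] := H [set v] (@compact_set1 X v) (ex_intro _ v erefl)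
  (fun y _ => TU y I).
exists N => n Nn x.
have [_ /(_ x I) [a Ha b]] := HN n Nn.
have [s [sz ea]] := hutch_word Ha.
by exists s; rewrite -ea.
Qed.

Definition hitset {R : realType} {X : pseudoMetricType R} k (f : 'I_k -> X -> X)
  (x0 : X) (rho : R) (n : nat) : set X :=
  [set v | exists t : n.-tuple 'I_k, closed_ball x0 rho (wm f t v)].

Lemma hitset_closed {R : realType} {X : pseudoMetricType R} k (f : 'I_k -> X -> X)
  x0 rho n : (forall i, continuous (f i)) -> closed (hitset f x0 rho n).
Proof.
move=> fc.
have -> : hitset f x0 rho n =
    ~` [set v | forall t : n.-tuple 'I_k, ~ closed_ball x0 rho (wm f t v)].
  apply/seteqP; split => v /=.
    by move=> [t h] nall; exact: nall t h.
  by move=> nh; apply: contrapT => nex; apply: nh => t Pt; apply: nex; exists t.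
apply: open_closedC; rewrite openE => p /= Hp.
suff : \forall v \near p, forall t : n.-tuple 'I_k, ~ closed_ball x0 rho (wm f t v) by [].
apply: filter_forall => t.
have nb : nbhs (wm f t p) (~` closed_ball x0 rho).
  apply: open_nbhs_nbhs; split; last exact: Hp.
  exact/closed_openC/closed_ball_closed.
have := @wm_cont _ _ f t fc p _ nb. by [].
Qed.

Lemma baire_compact {R : realType} {X : pseudoMetricType R} (P : nat -> set X) :
  compact [set: X] -> [set: X] !=set0 -> (forall N, closed (P N)) ->
  (forall v, exists N, P N v) ->
  exists N O, [/\ open O, O !=set0 & O `<=` P N].
Proof.
move=> cT [x0 _] Pc Pcov; apply: contrapT => nH.
have step : forall N O, open O -> O !=set0 ->
    exists O', [/\ open O', O' !=set0 & closure O' `<=` O `&` ~` P N].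
  move=> N O oO nO.
  have nsub : ~ (O `<=` P N) by move=> sub; apply: nH; exists N, O.
  have [c [Oc nPc]] : exists c, O c /\ ~ P N c.
    apply: contrapT => h; apply: nsub => c Oc; apply: contrapT => nP.
    by apply: h; exists c.
  have W : open (O `&` ~` P N) := openI oO (closed_openC (Pc N)).
  have /nbhs_ballP [r /= r0 sub] : nbhs c (O `&` ~` P N).
    by apply: open_nbhs_nbhs; split.
  have r20 : 0 < r / 2 by rewrite divr_gt0.
  exists (ball c (r / 2))°; split.
  - exact: open_interior.
  - by exists c; exact: nbhsx_ballx.
  - move=> y /(closureS (@interior_subset _ _)) /subset_closure_half => h.
    exact/sub/h.
have Hex : forall NO : nat * set X, exists O' : set X,
  open NO.2 -> NO.2 !=set0 ->
  [/\ open O', O' !=set0 & closure O' `<=` NO.2 `&` ~` P NO.1].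
  move=> [N O] /=; have [[oO nO]|h] := pselect (open O /\ O !=set0).
    by have [O' H] := step N O oO nO; exists O'.
  by exists set0 => oO nO; exfalso; exact: h.
have [g Hg] := choice Hex.
pose Os := fix Os n := if n is m.+1 then g (m, Os m) else [set: X].
have Inv : forall n, open (Os n) /\ Os n !=set0.
  elim=> [|n [oO nO]]; first by split; [exact: openT|exists x0].
  by have [o1 n1 _] := Hg (n, Os n) oO nO.
have Nest : forall n, closure (Os n.+1) `<=` Os n `&` ~` P n.
  by move=> n; have [oO nO] := Inv n; have [_ _ ] := Hg (n, Os n) oO nO.
have Sub : forall d n, Os (d + n)%N `<=` Os n.
  elim=> [|d IH] n //= y Hy.
  by apply: IH; have [] := Nest (d + n)%N y (subset_closure Hy).
have [c Hc] := choice (fun n => (Inv n).2).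
have [p [_ clp]] := cT (c @ \oo) _ filterT.
have [N PNp] := Pcov p.
have : closure (Os N.+1) p.
  move=> B Bp; apply: (clp _ _ _ Bp).
  exists N.+1 => // m /= Nm.
  have := Hc m; rewrite -(subnK Nm); apply: Sub.
by move=> /Nest [].
Qed.

Lemma lemmaU {R : realType} {X : pseudoMetricType R} k (f : 'I_k -> X -> X) :
  compact [set: X] -> (forall i, continuous (f i)) ->
  strict_attractor f [set: X] ->
  forall x0 (e : R), 0 < e ->
  exists n, forall v, exists s, size s = n /\ ball x0 e (wm f s v).
Proof.
move=> cT fc sa x0 e e0.
have rho0 : 0 < e / 2 by rewrite divr_gt0.
pose P N := [set v | forall n, (N <= n)%N -> hitset f x0 (e / 2) n v].
have Pc : forall N, closed (P N).
  move=> N p cp n Nn; apply: (@hitset_closed _ _ _ f x0 (e / 2) n fc).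
  by apply: (closureS _ cp) => v Pv; exact: Pv n Nn.
have Pcov : forall v, exists N, P N v.
  move=> v; have [N HN] := lemmaA sa v rho0.
  exists N => n Nn; have [s [sz b]] := HN n Nn x0.
  exists (@Tuple n _ s (introT eqP sz)).
  exact/subset_closure/ball_sym.
have ne : [set: X] !=set0 by case: sa.
have [N [O [oO [o Oo] OP]]] := baire_compact cT ne Pc Pcov.
have /nbhs_ballP [eta /= eta0 subO] : nbhs o O by apply: open_nbhs_nbhs.
pose Rs S := [set v | exists s : seq 'I_k, (size s <= S)%N /\ O (wm f s v)].
have oR : forall S, open (Rs S).
  move=> S; rewrite openE => p [s [sz Op]].
  have nb : nbhs (wm f s p) O by apply: open_nbhs_nbhs.
  have := @wm_cont _ _ f s fc p _ nb.
  move=> h; have h' : nbhs p [set y | O (wm f s y)] := h.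
  by apply: (filterS _ h') => y Oy; exists s.
have cov : forall v, exists S, Rs S v.
  move=> v; have [N' HN'] := lemmaA sa v eta0.
  have [s [sz b]] := HN' N' (leqnn _) o.
  by exists N', s; split; [rewrite sz|apply/subO/ball_sym].
have Rmono : forall a b v, (a <= b)%N -> Rs a v -> Rs b v.
  by move=> a b v ab [s [sz Os]]; exists s; split => //; apply: leq_trans ab.
have cc := cT; rewrite compact_near_coveringP in cc.
have := cc nat \oo (fun S v => Rs S v) _.
case.
  move=> x _; have [S HS] := cov x.
  hnf; exists (Rs S, [set i | (S <= i)%N]); first split.
  - exact: (@open_nbhs_nbhs _ x (Rs S) (conj (oR S) HS)).
  - by exists S.
  by move=> [y i] /= [Ry Si]; apply: Rmono Si Ry.
move=> S _ HS.
exists (S + N)%N => v.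
have [s [sz Os]] := HS S (leqnn _) v I.
have [t ht] := OP _ Os (S + N - size s)%N ltac:(lia).
exists (s ++ t); split.
  by rewrite size_cat size_tuple; lia.
by rewrite wm_cat; apply: subset_closure_half.
Qed.

Lemma exists_pow_lt {R : realType} (nu e : R) : 0 < nu -> nu < 1 -> 0 < e ->
  exists m : nat, nu ^+ m < e.
Proof.
move=> nu0 nu1 e0.
have nuabs : `|nu| < 1 by rewrite gtr0_norm.
have [N _ HN] := cvgr_lt 0 (cvg_expr nuabs) e e0.
by exists N; apply: HN => /=.
Qed.

Definition ws k (w : Sigma k) (n : nat) : seq 'I_k := [seq w (j%:Z) | j <- iota 0 n].

Lemma iter_Phi {X : Type} k (f : 'I_k -> X -> X) n w x :
  iter n (Phi f) (w, x) = (fun i => w (i + n%:Z), wm f (ws w n) x).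
Proof.
elim: n => [|n IH].
  by rewrite /=; congr pair; apply: funext => i; rewrite addr0.
have -> : ws w n.+1 = ws w n ++ [:: w n%:Z] by rewrite /ws -addn1 iotaD map_cat.
rewrite iterS IH /Phi /shift wm_cat /=; congr pair.
  by apply: funext => i; congr w; lia.
Qed.

Definition Phiinv {X : Type} k (g : 'I_k -> X -> X) (p : Sigma k * X) : Sigma k * X :=
  (fun i => p.1 (i - 1), g (p.1 (-1)) p.2).

Lemma Phi_Phiinv {X : Type} k (f g : 'I_k -> X -> X) :
  (forall i, cancel (g i) (f i)) -> forall p, Phi f (Phiinv g p) = p.
Proof.
move=> gK [w x]; rewrite /Phi /Phiinv /shift /=; congr pair.
  by apply: funext => i /=; congr w; lia.
by rewrite add0r gK.
Qed.

Lemma iter_Phi_inv {X : Type} k (f g : 'I_k -> X -> X) :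
  (forall i, cancel (g i) (f i)) -> forall n p,
  iter n (Phi f) (iter n (Phiinv g) p) = p.
Proof.
move=> gK; elim=> [|n IH] p //.
by rewrite iterSr iterS Phi_Phiinv.
Qed.

Lemma wm_surj {X : Type} k (f g : 'I_k -> X -> X) :
  (forall i, cancel (g i) (f i)) -> forall s y, exists u, wm f s u = y.
Proof.
move=> gK; elim=> [|i s IH] y; first by exists y.
have [u' <-] := IH y; exists (g i u') => /=; by rewrite gK.
Qed.
End Helpers.
Import Helpers.
Lemma map_iota_eq (T : Type) (F G : nat -> T) a n :
  (forall j : nat, (a <= j < a + n)%N -> F j = G j) ->
  [seq F j | j <- iota a n] = [seq G j | j <- iota a n].
Proof. by move=> H; apply/eq_in_map => j; rewrite mem_iota; exact: H. Qed.

Theorem theoremA (R : realType) (nu : R) (X : pseudoMetricType R)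
  (k : nat) (f : 'I_k -> X -> X) :
  0 < nu -> nu < 1 ->
  hausdorff_space X -> compact [set: X] -> (0 < k)%N ->
  (forall i, homeomorphism (f i)) ->
  strict_attractor f [set: X] ->
  forall p : Sigma k * X, dense_SigmaX nu (Wuu f p).
Proof.
move=> nu0 nu1 hX cT k0 fh sa [w x] [w0 y0] e e0 /=.
have fc : forall i, continuous (f i) := fun i => (fh i).1.
have [g Hg] := choice (fun i => (fh i).2).
have gK : forall i, cancel (g i) (f i) by move=> i; case: (Hg i).
have [m nume] := exists_pow_lt nu0 nu1 e0.
pose sG := [seq w0 (j%:Z - m%:Z) | j <- iota 0 m].
have [u0 Gu0] := wm_surj gK sG y0.
have [del del0 Hdel] : exists2 del, 0 < del &
    forall u, ball u0 del u -> ball y0 e (wm f sG u).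
  have nb : nbhs (wm f sG u0) (ball y0 e) by rewrite Gu0; apply: nbhsx_ballx.
  have := @wm_cont _ _ f sG fc u0 _ nb.
  by move/nbhs_ballP => [d /= d0 H]; exists d => // u /H.
have [L HL] := lemmaU cT fc sa u0 del0.
pose n := (L + m)%N.
pose q := iter n (Phiinv g) (w, x).
have [s [sz Hs]] := HL q.2.
have i0 : 'I_k := Ordinal k0.
pose w' : Sigma k := fun i => if (i < 0)%R then q.1 i
  else if (i < L%:Z)%R then nth i0 s `|i|%N else w0 (i - n%:Z).
exists (iter n (Phi f) (w', q.2)).
  exists n, q, (w', q.2); split; first exact: iter_Phi_inv.
  split => //; split => //= i i0'.
  by rewrite /w' i0'.
rewrite iter_Phi /=; split.
- apply: le_lt_trans nume; apply: ge_inf.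
    by exists 0 => _ [j _ <-]; apply: exprn_ge0; apply: ltW.
  exists m => //= i im; rewrite /w'.
  case: ifP => h1; first lia.
  case: ifP => h2; first lia.
  congr w0; lia.
- have -> : ws w' n = s ++ sG.
    rewrite /ws /n iotaD map_cat; congr cat.
      rewrite -[RHS](mkseq_nth i0 s) /mkseq sz; apply: map_iota_eq => j /andP [_ jL].
      rewrite /w'.
      case: ifP => h1 //; lia.
    have -> : iota (0 + L) m = map (addn L) (iota 0 m).
      by rewrite add0n -{1}[L]addn0 iotaDl.
    rewrite -map_comp; apply: map_iota_eq => j /andP [_ jm] /=.
    rewrite /w'.
    case: ifP => h2; first lia.
    congr w0; lia.
  by rewrite wm_cat; apply: Hdel.
Qed.
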